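(* Consider the iterative algorithm (described in the context) for the incomplete multi-view learning problem. The sequences $\{\mathcal{G}^k\}$ and $\{\mathcal{Y}^k\}$ it generates satisfy $\lim_{k\to\infty}\|\mathcal{G}^k-\mathcal{Y}^k\|_F=0$, $\lim_{k\to\infty}\|\mathcal{G}^{k+1}-\mathcal{G}^k\|_F=0$, and $\lim_{k\to\infty}\|\mathcal{Y}^{k+1}-\mathcal{Y}^k\|_F=0$.
   Context: Data: $m$ views $X_i\in\mathbb{R}^{d_i\times n}$, $i=1,\dots,m$, of $n$ samples; if the $j$-th instance of view $i$ is missing then the column $X_{i(:,j)}=0$. $P_i\in\mathbb{R}^{n\times n}$ is diagonal with $P_{i(j,j)}=1$ if the $j$-th instance of view $i$ is present and $0$ otherwise; $n_i$ is the number of present instances of view $i$. Assume $X_iP_iX_i^\top$ is invertible for each $i$. $\mathcal{M}\in\mathbb{R}^{n\times m\times n}$ is a given (incomplete) graph tensor, and $\Omega$ is the set of indices $(i,j,k)$ where $\mathcal{M}$ is observed; $P_\Omega(\mathcal{Z})$ keeps entries with indices in $\Omega$ and sets the others to $0$. For a graph tensor $\mathcal{G}\in\mathbb{R}^{n\times m\times n}$ write $G_i=\mathcal{G}_{(:,i,:)}\in\mathbb{R}^{n\times n}$. For $A\in\mathbb{R}^{d\times n}$ and $G\in\mathbb{R}^{n\times n}$, $\mathrm{tr}(AL_GA^\top)=\tfrac12\sum_{j,k}G_{(j,k)}\|A_{(:,j)}-A_{(:,k)}\|_2^2$. Parameters: $\lambda,\mu,\gamma>0$, $0<p\le1$, weights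 $w_1\ge\cdots\ge w_l\ge0$ with $l=\min(n,m)$, a semi-orthogonal $\Phi\in\mathbb{R}^{n\times r}$ ($\Phi^\top\Phi=I_r$) and $\Phi^c\in\mathbb{R}^{n\times(n-r)}$ with $\overline{\Phi}=[\Phi,\Phi^c]$ orthogonal. Tensor norm: for $\mathcal{X}\in\mathbb{R}^{n_1\times n_2\times n_3}$ with frontal slices $X^{(k)}$ and $\Psi\in\mathbb{R}^{n_3\times s}$, $\mathcal{X}_\Psi$ has frontal slices $X_\Psi^{(i)}=\sum_k\Psi_{ki}X^{(k)}$; $\|\mathcal{X}\|_{\Phi,w,S_p}^p=\sum_{i=1}^r\sum_{j=1}^l w_j\sigma_j(X_\Phi^{(i)})^p$, $\sigma_j$ the $j$-th smallest singular value. For a matrix $Y=U\Sigma V^\top$ (SVD), $S_{\tau,w,p}(Y)=U\mathrm{diag}(\gamma_j)V^\top$ with $\gamma_j$ (replacing $\sigma_j(Y)$) a global minimizer of $\min_{x\ge0}\frac12(x-\sigma_j(Y))^2+\tau w_jx^p$. With $f_i(A,W_i,G_i)=\|(A-W_i^\top X_i)P_i\|_F^2+\lambda\,\mathrm{tr}(AL_{G_i}A^\top)$, the algorithm is: initialize $k=0$, $\eta=1.1$, $\rho^0=10^{-4}$, $\delta_i^0=1/m$, $\mathcal{C}^0=0$, $\mathcal{G}^0=\mathcal{Y}^0=\mathcal{M}$. At iteration $k$: (1) $(A^{k+1},\{W_i^{k+1}\})$ minimizes $\sum_i\delta_i^k f_i(A,W_i,G_i^k)$ subject to $AA^\top=I_d$,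 with $W_i^{k+1}=(X_iP_iX_i^\top)^{-1}X_iP_i(A^{k+1})^\top$; (2) $\delta_i^{k+1}=n_i/\sqrt{f_i(A^{k+1},W_i^{k+1},G_i^k)}$; (3) $\mathcal{G}^{k+1}$ is the minimizer of $\lambda\sum_i\delta_i^{k+1}\mathrm{tr}(A^{k+1}L_{G_i}(A^{k+1})^\top)+\frac\gamma2\|P_\Omega(\mathcal{G})-P_\Omega(\mathcal{M})\|_F^2+\frac{\rho^k}2\|\mathcal{G}-\mathcal{Y}^k+\mathcal{C}^k/\rho^k\|_F^2$ subject to $G_i\ge0$ entrywise and $G_i\mathbf{1}=\mathbf{1}$ for all $i$; (4) with $\mathcal{B}^k=\mathcal{G}^{k+1}+\mathcal{C}^k/\rho^k$, $\mathcal{Y}^{k+1}=(\mathcal{Z})_{\overline{\Phi}^\top}$ where $\mathcal{Z}$ has frontal slices $S_{\mu/\rho^k,w,p}(B_\Phi^{k\,(i)})$ for $i\le r$ and $B_{\Phi^c}^{k\,(j)}$ for the remaining $n-r$ slices (a minimizer of $\frac{\mu}{\rho^k}\|\mathcal{Y}\|_{\Phi,w,S_p}^p+\frac12\|\mathcal{B}^k-\mathcal{Y}\|_F^2$); (5) $\mathcal{C}^{k+1}=\mathcal{C}^k+\rho^k(\mathcal{G}^{k+1}-\mathcal{Y}^{k+1})$; (6) $\rho^{k+1}=\eta\rho^k$. *)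

(* Defs.v *)
From HB Require Import structures.
From mathcomp Require Import all_boot all_order all_algebra.
From mathcomp Require Import all_classical all_reals all_analysis.

Set Implicit Arguments.
Unset Strict Implicit.
Unset Printing Implicit Defensive.

Import Order.TTheory GRing.Theory Num.Theory.
Local Open Scope ring_scope.

Section IMVL.
Variable R : realType.

Definition tensor (n1 n2 n3 : nat) := 'I_n1 -> 'I_n2 -> 'I_n3 -> R.

Definition tzero n1 n2 n3 : tensor n1 n2 n3 := fun _ _ _ => 0.
Definition tadd n1 n2 n3 (S T : tensor n1 n2 n3) : tensor n1 n2 n3 :=
  fun a b c => S a b c + T a b c.
Definition tsub n1 n2 n3 (S T : tensor n1 n2 n3) : tensor n1 n2 n3 :=
  fun a b c => S a b c - T a b c.
Definition tscale n1 n2 n3 (x : R) (T : tensor n1 n2 n3) : tensor n1 n2 n3 :=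
  fun a b c => x * T a b c.

Definition tnormF2 n1 n2 n3 (T : tensor n1 n2 n3) : R :=
  \sum_(a < n1) \sum_(b < n2) \sum_(c < n3) T a b c ^+ 2.
Definition tnormF n1 n2 n3 (T : tensor n1 n2 n3) : R := Num.sqrt (tnormF2 T).

Definition POm n1 n2 n3 (Om : 'I_n1 -> 'I_n2 -> 'I_n3 -> bool)
  (T : tensor n1 n2 n3) : tensor n1 n2 n3 :=
  fun a b c => if Om a b c then T a b c else 0.

Definition fslice n1 n2 n3 (T : tensor n1 n2 n3) (k : 'I_n3) : 'M[R]_(n1, n2) :=
  \matrix_(a, b) T a b k.
Definition lslice n1 n2 n3 (T : tensor n1 n2 n3) (i : 'I_n2) : 'M[R]_(n1, n3) :=
  \matrix_(a, c) T a i c.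

Definition tmode3 n1 n2 n3 s (T : tensor n1 n2 n3) (Psi : 'M[R]_(n3, s))
  : tensor n1 n2 s :=
  fun a b i => \sum_(k < n3) Psi k i * T a b k.

Definition mfro2 p q (A : 'M[R]_(p, q)) : R := \sum_i \sum_j A i j ^+ 2.

(* tr(A L_G A^T) = 1/2 sum_{j,k} G_{jk} ||A_{:,j} - A_{:,k}||^2 *)
Definition lapTr d n (A : 'M[R]_(d, n)) (G : 'M[R]_n) : R :=
  2^-1 * \sum_(j < n) \sum_(k < n) G j k * \sum_(a < d) (A a j - A a k) ^+ 2.

Definition Pmat n (pres : 'I_n -> bool) : 'M[R]_n :=
  \matrix_(a, b) (if (a == b) && pres a then 1 else 0).

Definition fobj d n di (lam : R) (X : 'M[R]_(di, n)) (P : 'M[R]_n)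
  (A : 'M[R]_(d, n)) (W : 'M[R]_(di, d)) (G : 'M[R]_n) : R :=
  mfro2 ((A - W^T *m X) *m P) + lam * lapTr A G.

(* rectangular n x m "diagonal" matrix with diagonal entries s_0..s_{l-1} *)
Definition rdiag (n m : nat) l (s : 'I_l -> R) : 'M[R]_(n, m) :=
  \matrix_(a, b) \sum_(j < l | (nat_of_ord a == j) && (nat_of_ord b == j)) s j.
Arguments rdiag n m [l] s.

(* Z = S_{tau,w,p}(Y): Y = U diag(sigma) V^T is an SVD (singular values listed
   in increasing order, sigma_j the j-th smallest), and each gamma_j is a global
   minimizer of  x >= 0 |-> 1/2 (x - sigma_j)^2 + tau w_j x^p. *)
Definition Sthresh n m (tau : R) (w : 'I_(minn n m) -> R) (p : R)
  (Y Z : 'M[R]_(n, m)) : Prop :=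
  exists (U : 'M[R]_n) (V : 'M[R]_m) (sig gam : 'I_(minn n m) -> R),
    U^T *m U = 1%:M /\ V^T *m V = 1%:M /\
    (forall j, 0 <= sig j) /\
    (forall j1 j2 : 'I_(minn n m), (j1 <= j2)%N -> sig j1 <= sig j2) /\
    Y = U *m rdiag n m sig *m V^T /\
    (forall j, 0 <= gam j /\
       forall x, 0 <= x ->
         2^-1 * (gam j - sig j) ^+ 2 + tau * w j * powR (gam j) p
         <= 2^-1 * (x - sig j) ^+ 2 + tau * w j * powR x p) /\
    Z = U *m rdiag n m gam *m V^T.

Definition Zten n m r (Zs : 'I_r -> 'M[R]_(n, m)) (Bc : tensor n m (n - r))
  : tensor n m (r + (n - r)) :=
  fun a b i => match fintype.split i with
               | inl i1 => Zs i1 a b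
               | inr i2 => Bc a b i2
               end.

Definition rho (k : nat) : R := (10000%:R)^-1 * (11%:R / 10%:R) ^+ k.

Definition Gfeas n m (G : tensor n m n) : Prop :=
  (forall j i k, 0 <= G j i k) /\
  (forall j i, \sum_(k < n) G j i k = 1).

Definition Gobj n m d (lam gam rh : R) (Om : 'I_n -> 'I_m -> 'I_n -> bool)
  (M : tensor n m n) (A : 'M[R]_(d, n)) (delta : 'I_m -> R)
  (Y C G : tensor n m n) : R :=
  lam * (\sum_(i < m) delta i * lapTr A (lslice G i))
  + gam / 2 * tnormF2 (tsub (POm Om G) (POm Om M))
  + rh / 2 * tnormF2 (tadd (tsub G Y) (tscale rh^-1 C)).

Definition alg_run n m d r (di : 'I_m -> nat) (X : forall i, 'M[R]_(di i, n))
  (pres : 'I_m -> 'I_n -> bool) (M : tensor n m n)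
  (Om : 'I_n -> 'I_m -> 'I_n -> bool) (lam mu gam p : R)
  (w : 'I_(minn n m) -> R) (Phi : 'M[R]_(n, r)) (Phic : 'M[R]_(n, n - r))
  (A : nat -> 'M[R]_(d, n)) (W : nat -> forall i, 'M[R]_(di i, d))
  (delta : nat -> 'I_m -> R) (G Y C : nat -> tensor n m n) : Prop :=
  (forall i, delta 0%N i = (m%:R)^-1) /\ C 0%N = @tzero n m n /\
  G 0%N = M /\ Y 0%N = M /\
  forall k : nat,
  (A k.+1 *m (A k.+1)^T = 1%:M /\
   (forall i, W k.+1 i = invmx (X i *m Pmat (pres i) *m (X i)^T)
                          *m X i *m Pmat (pres i) *m (A k.+1)^T) /\
   (forall (A' : 'M[R]_(d, n)) (W' : forall i, 'M[R]_(di i, d)),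
      A' *m A'^T = 1%:M ->
      \sum_(i < m) delta k i *
          fobj lam (X i) (Pmat (pres i)) (A k.+1) (W k.+1 i) (lslice (G k) i)
      <= \sum_(i < m) delta k i *
          fobj lam (X i) (Pmat (pres i)) A' (W' i) (lslice (G k) i))) /\
  (forall i, delta k.+1 i =
     (#|[pred j | pres i j]|)%:R /
       Num.sqrt (fobj lam (X i) (Pmat (pres i)) (A k.+1) (W k.+1 i)
                      (lslice (G k) i))) /\
  (Gfeas (G k.+1) /\
   forall G', Gfeas G' ->
     Gobj lam gam (rho k) Om M (A k.+1) (delta k.+1) (Y k) (C k) (G k.+1)
     <= Gobj lam gam (rho k) Om M (A k.+1) (delta k.+1) (Y k) (C k) G') /\
  (let B := tadd (G k.+1) (tscale (rho k)^-1 (C k)) in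
   exists Zs : 'I_r -> 'M[R]_(n, m),
     (forall i, Sthresh (mu / rho k) w p (fslice (tmode3 B Phi) i) (Zs i)) /\
     Y k.+1 = tmode3 (Zten Zs (tmode3 B Phic)) (row_mx Phi Phic)^T) /\
  C k.+1 = tadd (C k) (tscale (rho k) (tsub (G k.+1) (Y k.+1))).

End IMVL.

Arguments Pmat {R n} pres.
Arguments rho {R} k.

(* Main.v *)
Require Import Defs.
From HB Require Import structures.
From mathcomp Require Import all_boot all_order all_algebra.
From mathcomp Require Import all_classical all_reals all_analysis.
From mathcomp Require Import ring lra.
Import Order.TTheory GRing.Theory Num.Theory.
Local Open Scope classical_set_scope.
Local Open Scope ring_scope.
Import numFieldNormedType.Exports.
Section Aux1.
Variable R : realType.
Set Implicit Arguments.
Unset Strict Implicit.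

Lemma sqrD_le (a b : R) : (a + b) ^+ 2 <= 2 * a ^+ 2 + 2 * b ^+ 2.
Proof.
have : 0 <= (a - b) ^+ 2 by apply: sqr_ge0.
move=> h; rewrite -subr_ge0; apply: le_trans h _.
rewrite le_eqVlt; apply/orP; left; apply/eqP; ring.
Qed.

Lemma tnormF2_ge0 n1 n2 n3 (T : tensor R n1 n2 n3) : 0 <= tnormF2 T.
Proof.
by apply: sumr_ge0 => a _; apply: sumr_ge0 => b _; apply: sumr_ge0 => c _;
  apply: sqr_ge0.
Qed.

Lemma tnormF2_le n1 n2 n3 (S T1 T2 : tensor R n1 n2 n3) (c1 c2 : R) :
  (forall a b c, S a b c ^+ 2 <= c1 * T1 a b c ^+ 2 + c2 * T2 a b c ^+ 2) ->
  tnormF2 S <= c1 * tnormF2 T1 + c2 * tnormF2 T2.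
Proof.
move=> h; rewrite /tnormF2 !mulr_sumr -big_split /=; apply: ler_sum => a _.
rewrite !mulr_sumr -big_split /=; apply: ler_sum => b _.
rewrite !mulr_sumr -big_split /=; apply: ler_sum => c _.
exact: h.
Qed.

Lemma tnormF2_le1 n1 n2 n3 (S T : tensor R n1 n2 n3) (c : R) :
  (forall a b c', S a b c' ^+ 2 <= c * T a b c' ^+ 2) ->
  tnormF2 S <= c * tnormF2 T.
Proof.
move=> h; have := @tnormF2_le _ _ _ S T T c 0.
rewrite mul0r addr0; apply => a b c'; rewrite mul0r addr0; exact: h.
Qed.

Lemma tnormF2_eq n1 n2 n3 (S T : tensor R n1 n2 n3) :
  (forall a b c, S a b c = T a b c) -> tnormF2 S = tnormF2 T.
Proof.
move=> h; rewrite /tnormF2; apply: eq_bigr => a _; apply: eq_bigr => b _.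
by apply: eq_bigr => c _; rewrite h.
Qed.

Lemma tnormF_cvg0 (u : nat -> R) :
  (fun k => u k) @ \oo --> 0 -> (fun k => Num.sqrt (u k)) @ \oo --> 0.
Proof.
move=> /cvgr0Pnorm_lt h; apply/cvgr0Pnorm_lt => e e0.
have e20 : 0 < e ^+ 2 by rewrite exprn_gt0.
near=> k.
have hk : `|u k| < e ^+ 2 by near: k; exact: h.
rewrite ger0_norm ?sqrtr_ge0 //.
apply: (le_lt_trans (ler_wsqrtr (real_ler_norm (num_real (u k))))).
have -> : e = Num.sqrt (e ^+ 2) by rewrite sqrtr_sqr ger0_norm // ltW.
by rewrite ltr_sqrt.
Unshelve. all: by end_near.
Qed.

Lemma powR_le_sq (x p : R) : 0 <= x -> 0 < p -> p <= 1 -> powR x p <= 1 + x ^+ 2.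
Proof.
move=> x0 p0 p1.
case: (leP 1 x) => hx.
  apply: le_trans (ler1_powR hx p1) _.
  have : x <= x ^+ 2 by rewrite expr2 ler_peMl // (le_trans _ hx).
  move=> h; apply: le_trans h _; rewrite lerDr; exact: ler01.
have hx1 : x ^+ 2 >= 0 by apply: sqr_ge0.
apply: le_trans (_ : 1 <= _); last by rewrite lerDl.
case: (eqVneq x 0) => [->|xn0].
  by rewrite powR0 ?ler01 // gt_eqF.
have x0' : 0 < x by rewrite lt_def xn0 x0.
have := @ger_powR R x _ 0 p (ltW p0).
by rewrite powRr0; apply; rewrite x0' ltW.
Qed.

End Aux1.
Section Aux2.
Variable R : realType.
Set Implicit Arguments.
Unset Strict Implicit.

Lemma mfro2_tr p q (A : 'M[R]_(p, q)) : mfro2 A = \tr (A *m A^T).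
Proof.
rewrite /mfro2 /mxtrace; apply: eq_bigr => i _; rewrite mxE.
by apply: eq_bigr => j _; rewrite !mxE expr2.
Qed.

Lemma mfro2_ge0 p q (A : 'M[R]_(p, q)) : 0 <= mfro2 A.
Proof. by apply: sumr_ge0 => i _; apply: sumr_ge0 => j _; apply: sqr_ge0. Qed.

Lemma mfro2_orth p q (U : 'M[R]_p) (V : 'M[R]_q) (D : 'M[R]_(p, q)) :
  U^T *m U = 1%:M -> V^T *m V = 1%:M -> mfro2 (U *m D *m V^T) = mfro2 D.
Proof.
move=> hU hV; rewrite !mfro2_tr !trmx_mul trmxK -!mulmxA.
rewrite (mulmxA V^T V) hV mul1mx mxtrace_mulC -!mulmxA hU mulmx1.
by [].
Qed.

Lemma rdiag_sub n m (s1 s2 : 'I_(minn n m) -> R) :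
  rdiag n m s1 - rdiag n m s2 = rdiag n m (fun j => s1 j - s2 j).
Proof. by apply/matrixP => a b; rewrite !mxE sumrB. Qed.

Lemma sum_if_eq n (k : nat) (x : R) : (k < n)%N ->
  \sum_(a < n) (if (nat_of_ord a == k) then x else 0) = x.
Proof.
move=> hk; rewrite -big_mkcond /=.
by rewrite (big_pred1 (Ordinal hk)).
Qed.

Lemma sq_sum_single l (P : pred 'I_l) (F : 'I_l -> R) :
  (forall j j', P j -> P j' -> j = j') ->
  (\sum_(j | P j) F j) ^+ 2 = \sum_(j | P j) F j ^+ 2.
Proof.
move=> hP; case: (pickP P) => [j0 Pj0 | none].
  have h0 : forall G : 'I_l -> R, \sum_(j | P j && (j != j0)) G j = 0.
    move=> G; apply: big1 => j /andP [Pj /eqP]; by move: (hP _ _ Pj Pj0).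
  by rewrite (bigD1 j0) //= h0 addr0 [RHS](bigD1 j0) //= h0 addr0.
by rewrite !big_pred0 // expr0n.
Qed.

Lemma mfro2_rdiag n m (s : 'I_(minn n m) -> R) :
  mfro2 (rdiag n m s) = \sum_j s j ^+ 2.
Proof.
rewrite /mfro2.
have e : forall a b, (rdiag n m s a b) ^+ 2 =
    \sum_(j < minn n m) (if (nat_of_ord a == j) && (nat_of_ord b == j) then s j ^+ 2 else 0).
  move=> a b; rewrite mxE sq_sum_single ?big_mkcond //.
  move=> j j' /andP [/eqP h1 _] /andP [/eqP h2 _]; apply: val_inj.
  by rewrite /= -h1 -h2.
rewrite (eq_bigr _ (fun a _ => eq_bigr _ (fun b _ => e a b))).
under eq_bigr => a _ do rewrite exchange_big /=.
rewrite exchange_big /=; apply: eq_bigr => j _.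
have hn : (j < n)%N by rewrite (leq_trans (ltn_ord j)) // geq_minl.
have hm : (j < m)%N by rewrite (leq_trans (ltn_ord j)) // geq_minr.
rewrite -[RHS](@sum_if_eq n j (s j ^+ 2) hn); apply: eq_bigr => a _.
case: (nat_of_ord a == j) => /=; last by rewrite big1.
by rewrite (@sum_if_eq m j _ hm).
Qed.

Lemma tnormF2_slices n1 n2 n3 (T : tensor R n1 n2 n3) :
  tnormF2 T = \sum_c mfro2 (fslice T c).
Proof.
rewrite /tnormF2 /mfro2 [RHS]exchange_big /=; apply: eq_bigr => a _.
rewrite [RHS]exchange_big /=; apply: eq_bigr => b _; apply: eq_bigr => c _.
by rewrite mxE.
Qed.

Definition rv n1 n2 n3 (T : tensor R n1 n2 n3) a b : 'rV[R]_n3 := \row_k T a b k.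

Lemma tmode3_rv n1 n2 n3 s (T : tensor R n1 n2 n3) (Psi : 'M[R]_(n3, s)) a b i :
  tmode3 T Psi a b i = (rv T a b *m Psi) 0 i.
Proof. by rewrite /tmode3 mxE; apply: eq_bigr => k _; rewrite mxE mulrC. Qed.

Lemma rv_tmode3 n1 n2 n3 s (T : tensor R n1 n2 n3) (Psi : 'M[R]_(n3, s)) a b :
  rv (tmode3 T Psi) a b = rv T a b *m Psi.
Proof. by apply/matrixP => x i; rewrite (ord1 x) mxE tmode3_rv. Qed.

Lemma sumsq_rv n1 n2 n3 (T : tensor R n1 n2 n3) a b :
  \sum_c T a b c ^+ 2 = (rv T a b *m (rv T a b)^T) 0 0.
Proof. by rewrite mxE; apply: eq_bigr => c _; rewrite !mxE expr2. Qed.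

Lemma tmode3_norm n1 n2 n3 s (T : tensor R n1 n2 n3) (Psi : 'M[R]_(n3, s)) :
  Psi *m Psi^T = 1%:M -> tnormF2 (tmode3 T Psi) = tnormF2 T.
Proof.
move=> hP; rewrite /tnormF2; apply: eq_bigr => a _; apply: eq_bigr => b _.
rewrite !sumsq_rv rv_tmode3 trmx_mul mulmxA -(mulmxA _ Psi) hP mulmx1.
by [].
Qed.

Lemma tmode3_comp n1 n2 n3 s (T : tensor R n1 n2 n3) (Psi : 'M[R]_(n3, s)) a b c :
  Psi *m Psi^T = 1%:M -> tmode3 (tmode3 T Psi) Psi^T a b c = T a b c.
Proof.
move=> hP; rewrite tmode3_rv rv_tmode3 -mulmxA hP mulmx1 mxE.
by [].
Qed.

Lemma tmode3_sub n1 n2 n3 s (S T : tensor R n1 n2 n3) (Psi : 'M[R]_(n3, s)) a b i :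
  tmode3 (tsub S T) Psi a b i = tsub (tmode3 S Psi) (tmode3 T Psi) a b i.
Proof.
by rewrite /tmode3 /tsub -sumrB; apply: eq_bigr => k _; rewrite mulrBr.
Qed.

End Aux2.
Section Aux3.
Variable R : realType.
Set Implicit Arguments.
Unset Strict Implicit.

Lemma thresh_scalar (tau w p sig gam : R) :
  0 <= tau -> 0 <= w -> 0 <= sig -> 0 < p -> p <= 1 -> 0 <= gam ->
  (forall x, 0 <= x ->
     2^-1 * (gam - sig) ^+ 2 + tau * w * powR gam p
     <= 2^-1 * (x - sig) ^+ 2 + tau * w * powR x p) ->
  (gam - sig) ^+ 2 <= 2 * tau * w * (1 + sig ^+ 2).
Proof.
move=> t0 w0 s0 p0 p1 g0 H.
have h := H sig s0; rewrite subrr expr0n /= mulr0 add0r in h.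
have h1 : 0 <= tau * w * powR gam p by rewrite mulr_ge0 ?powR_ge0 // mulr_ge0.
have h2 : tau * w * powR sig p <= tau * w * (1 + sig ^+ 2).
  by rewrite ler_wpM2l ?mulr_ge0 // powR_le_sq.
set A := (gam - sig) ^+ 2 in h *.
set B := tau * w * powR gam p in h h1.
set C := tau * w * powR sig p in h h2.
have -> : 2 * tau * w * (1 + sig ^+ 2) = 2 * (tau * w * (1 + sig ^+ 2)) by rewrite !mulrA.
set D := tau * w * (1 + sig ^+ 2) in h2 *.
lra.
Qed.

Lemma le_sum_term l (w : 'I_l -> R) j : (forall i, 0 <= w i) -> w j <= \sum_i w i.
Proof.
move=> h; rewrite (bigD1 j) //= lerDl; apply: sumr_ge0 => i _; exact: h.
Qed.

Lemma Sthresh_bound (n m : nat) (tau : R) (w : 'I_(minn n m) -> R) p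
  (Y Z : 'M[R]_(n, m)) :
  0 <= tau -> (forall j, 0 <= w j) -> 0 < p -> p <= 1 -> Sthresh tau w p Y Z ->
  mfro2 (Y - Z) <= 2 * tau * (\sum_j w j) * ((minn n m)%:R + mfro2 Y).
Proof.
move=> t0 w0 p0 p1 [U [V [sig [gam [hU [hV [hs [_ [hY [hg hZ]]]]]]]]]].
have eYZ : Y - Z = U *m (rdiag n m sig - rdiag n m gam) *m V^T.
  by rewrite hY hZ mulmxBr mulmxBl.
rewrite eYZ hY !mfro2_orth // rdiag_sub !mfro2_rdiag.
have -> : (minn n m)%:R + \sum_j sig j ^+ 2 = \sum_(j < minn n m) (1 + sig j ^+ 2).
  by rewrite big_split /= sumr_const card_ord.
rewrite mulr_sumr; apply: ler_sum => j _.
have [g0 hmin] := hg j.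
rewrite -sqrrN opprB.
apply: le_trans (thresh_scalar t0 (w0 j) (hs j) p0 p1 g0 hmin) _.
rewrite -!mulrA ler_wpM2l // ler_wpM2l // ler_wpM2r ?le_sum_term //.
by rewrite addr_ge0 ?sqr_ge0.
Qed.

Lemma ystep_bound n m r (B : tensor R n m n) (Phi : 'M[R]_(n, r))
  (Phic : 'M[R]_(n, n - r)) (Zs : 'I_r -> 'M[R]_(n, m)) (tau p : R)
  (w : 'I_(minn n m) -> R) :
  (row_mx Phi Phic)^T *m row_mx Phi Phic = 1%:M ->
  row_mx Phi Phic *m (row_mx Phi Phic)^T = 1%:M ->
  0 <= tau -> (forall j, 0 <= w j) -> 0 < p -> p <= 1 ->
  (forall i, Sthresh tau w p (fslice (tmode3 B Phi) i) (Zs i)) ->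
  tnormF2 (tsub B (tmode3 (Zten Zs (tmode3 B Phic)) (row_mx Phi Phic)^T))
  <= 2 * tau * (\sum_j w j) * (r%:R * (minn n m)%:R + tnormF2 B).
Proof.
move=> h1 h2 t0 w0 p0 p1 hS.
set Pb := row_mx Phi Phic.
set Yt := Zten Zs (tmode3 B Phic).
have sl : forall i, fintype.split (lshift (n - r) i) = inl i :=
  fun i => unsplitK (inl i).
have sr : forall i, fintype.split (rshift r i) = inr i :=
  fun i => unsplitK (inr i).
have e1 : tnormF2 (tsub B (tmode3 Yt Pb^T)) = tnormF2 (tsub (tmode3 B Pb) Yt).
  rewrite -(@tmode3_norm _ _ _ _ _ (tsub (tmode3 B Pb) Yt) Pb^T); last by rewrite trmxK.
  apply: tnormF2_eq => a b c; rewrite tmode3_sub /tsub tmode3_comp //.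
have e2 : tnormF2 (tsub (tmode3 B Pb) Yt) =
    \sum_(i < r) mfro2 (fslice (tmode3 B Phi) i - Zs i).
  rewrite tnormF2_slices big_split_ord /=.
  rewrite [X in _ + X]big1 ?addr0; last first.
    move=> i _; apply: big1 => a _; apply: big1 => b _.
    rewrite !mxE /tsub /Yt /Zten sr.
    have -> : tmode3 B Pb a b (rshift r i) = tmode3 B Phic a b i.
      by apply: eq_bigr => k _; rewrite /Pb row_mxEr.
    by rewrite subrr expr0n.
  apply: eq_bigr => i _; congr mfro2; apply/matrixP => a b.
  rewrite !mxE /tsub /Yt /Zten sl.
  have -> : tmode3 B Pb a b (lshift (n - r) i) = tmode3 B Phi a b i.
    by apply: eq_bigr => k _; rewrite /Pb row_mxEl.
  by [].
have e3 : \sum_(i < r) mfro2 (fslice (tmode3 B Phi) i) <= tnormF2 B.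
  rewrite -(@tmode3_norm _ _ _ _ _ B Pb) // tnormF2_slices big_split_ord /=.
  have -> : \sum_(i < r) mfro2 (fslice (tmode3 B Phi) i) =
            \sum_(i < r) mfro2 (fslice (tmode3 B Pb) (lshift (n - r) i)).
    apply: eq_bigr => i _; congr mfro2; apply/matrixP => a b; rewrite !mxE.
    by apply: eq_bigr => k _; rewrite /Pb row_mxEl.
  by rewrite lerDl; apply: sumr_ge0 => i _; apply: mfro2_ge0.
rewrite e1 e2.
have W0 : 0 <= \sum_j w j by apply: sumr_ge0.
have c0 : 0 <= 2 * tau * (\sum_j w j) by rewrite mulr_ge0 // mulr_ge0.
apply: le_trans (_ : \sum_(i < r) (2 * tau * (\sum_j w j) *
   ((minn n m)%:R + mfro2 (fslice (tmode3 B Phi) i))) <= _).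
  by apply: ler_sum => i _; exact: (Sthresh_bound t0 w0 p0 p1 (hS i)).
rewrite -mulr_sumr ler_wpM2l // big_split /= sumr_const card_ord.
by apply: lerD; [rewrite mulr_natl | exact: e3].
Qed.

End Aux3.
Section Aux4.
Variable R : realType.
Set Implicit Arguments.
Unset Strict Implicit.

Lemma cvg0_lin (u v : nat -> R) (c1 c2 : R) :
  u @ \oo --> 0 -> v @ \oo --> 0 ->
  (fun k => c1 * u k + c2 * v k) @ \oo --> 0.
Proof.
move=> hu hv.
have := cvgD (cvgM (cvg_cst c1) hu) (cvgM (cvg_cst c2) hv).
rewrite !mulr0 addr0 => H.
by apply: H; apply: eventually_filter.
Qed.

Lemma cvg0_scale (u : nat -> R) (c : R) :
  u @ \oo --> 0 -> (fun k => u k * c) @ \oo --> 0.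
Proof.
move=> hu; have := cvgM hu (cvg_cst c).
rewrite mul0r => H.
by apply: H; apply: eventually_filter.
Qed.

Lemma cvg0_le (u v : nat -> R) :
  (forall k, 0 <= u k <= v k) -> v @ \oo --> 0 -> u @ \oo --> 0.
Proof.
move=> h hv.
have := @squeeze_cvgr nat \oo _ R (fun=> 0) v u.
move=> H; apply: H => //.
  by near=> k; exact: h.
exact: cvg_cst.
Unshelve. all: by end_near.
Qed.

Lemma cvg0_shift (u : nat -> R) : (fun k => u k.+1) @ \oo --> 0 -> u @ \oo --> 0.
Proof. by rewrite -(cvg_shiftS u). Qed.

Lemma cvg0_shift' (u : nat -> R) : u @ \oo --> 0 -> (fun k => u k.+1) @ \oo --> 0.
Proof. by rewrite -(cvg_shiftS u). Qed.

Lemma rec_cvg (E a : nat -> R) (K : R) : 0 <= K ->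
  (forall k, 0 <= E k) -> (forall k, 0 <= a k) -> a @ \oo --> 0 ->
  (forall k, E k.+1 <= a k.+1 * (K + E k)) -> E @ \oo --> 0.
Proof.
move=> K0 E0 a0 ha hE.
have : \forall k \near \oo, `|a k| < 2^-1 by move/cvgr0Pnorm_lt: ha; apply.
move=> [N _ hN].
have aN : forall k, (N <= k)%N -> a k <= 2^-1.
  by move=> k hk; have := hN k hk; rewrite /= ger0_norm // => /ltW.
have bd : forall k, (N <= k)%N -> E k <= K + E N.
  move=> k hk; elim: k hk => [|k IH] hk.
    by rewrite leqn0 in hk; move/eqP: hk => ->; rewrite lerDr.
  case: (leqP N k) => hNk.
    apply: le_trans (hE k) _.
    have h1 : a k.+1 * (K + E k) <= 2^-1 * (K + E k).
      by rewrite ler_wpM2r ?addr_ge0 // aN // ltnW.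
    apply: le_trans h1 _.
    have := IH hNk; have := E0 N; lra.
  have -> : k.+1 = N by apply/eqP; rewrite eqn_leq hk hNk.
  by rewrite lerDr.
apply: cvg0_shift; rewrite -(cvg_shiftn N (fun k => E k.+1)).
apply: (@cvg0_le _ (fun k => a (k + N).+1 * (K + (K + E N)))).
  move=> k; rewrite E0 /=; apply: le_trans (hE _) _.
  by rewrite ler_wpM2l // lerD2l bd // leq_addl.
apply: (@cvg0_scale (fun k => a (k + N).+1)).
by rewrite (cvg_shiftn N (fun k => a k.+1)); apply: cvg0_shift'.
Qed.

End Aux4.
Section Aux5.
Variable R : realType.
Set Implicit Arguments.
Unset Strict Implicit.

Lemma rho_pos k : 0 < @rho R k.
Proof. by rewrite /rho mulr_gt0 ?invr_gt0 ?ltr0n // exprn_gt0 // divr_gt0 ?ltr0n. Qed.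

Lemma rhoS k : @rho R k.+1 = rho k * (11%:R / 10%:R).
Proof. by rewrite /rho exprS; ring. Qed.

Lemma rho_inv_cvg : (fun k => (@rho R k)^-1) @ \oo --> 0.
Proof.
apply: (@cvg0_le R _ (fun k => ((11%:R / 10%:R)^-1) ^+ k * 10000%:R)).
  move=> k; rewrite invr_ge0 ltW ?rho_pos //=.
  by rewrite /rho invfM invrK exprVn mulrC.
apply: cvg0_scale; apply: cvg_expr.
have h : (1 : R) < 11%:R / 10%:R by rewrite ltr_pdivlMr ?ltr0n // mul1r ltr_nat.
rewrite ger0_norm ?invr_ge0 ?divr_ge0 ?ler0n //.
by rewrite invf_lt1 // (lt_trans ltr01 h).
Qed.

Lemma tnormF2_le3 n1 n2 n3 (S T1 T2 T3 : tensor R n1 n2 n3) (c1 c2 c3 : R) :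
  (forall a b c, S a b c ^+ 2 <= c1 * T1 a b c ^+ 2 + c2 * T2 a b c ^+ 2
                                 + c3 * T3 a b c ^+ 2) ->
  tnormF2 S <= c1 * tnormF2 T1 + c2 * tnormF2 T2 + c3 * tnormF2 T3.
Proof.
move=> h; rewrite /tnormF2 !mulr_sumr -!big_split /=; apply: ler_sum => a _.
rewrite !mulr_sumr -!big_split /=; apply: ler_sum => b _.
rewrite !mulr_sumr -!big_split /=; apply: ler_sum => c _.
exact: h.
Qed.

Lemma Gfeas_le1 n m (G : tensor R n m n) j i k : Gfeas G -> G j i k <= 1.
Proof.
move=> [h0 h1]; rewrite -(h1 j i); exact: le_sum_term.
Qed.

Lemma Gfeas_norm n m (G : tensor R n m n) : Gfeas G -> tnormF2 G <= (n * m)%:R.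
Proof.
move=> hG; have [h0 h1] := hG.
apply: (@le_trans _ _ (\sum_(j < n) \sum_(i < m) \sum_(k < n) G j i k)).
  apply: ler_sum => j _; apply: ler_sum => i _; apply: ler_sum => k _.
  by rewrite expr2 ler_piMr // Gfeas_le1.
under eq_bigr => j _ do under eq_bigr => i _ do rewrite h1.
by rewrite !sumr_const !card_ord -[m%:R *+ n]mulr_natl -natrM.
Qed.

Lemma lapTr_ge0 d n (A : 'M[R]_(d, n)) (Gm : 'M[R]_n) :
  (forall j k, 0 <= Gm j k) -> 0 <= lapTr A Gm.
Proof.
move=> h; rewrite /lapTr mulr_ge0 ?invr_ge0 ?ler0n //.
apply: sumr_ge0 => j _; apply: sumr_ge0 => k _; rewrite mulr_ge0 //.
by apply: sumr_ge0 => a _; apply: sqr_ge0.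
Qed.

Lemma lapTr_le d n (A : 'M[R]_(d, n)) (Gm : 'M[R]_n) :
  A *m A^T = 1%:M -> (forall j k, 0 <= Gm j k <= 1) ->
  lapTr A Gm <= ((4 * d)%:R *+ n) *+ n.
Proof.
move=> hA h.
have hA1 : forall a j, A a j ^+ 2 <= 1.
  move=> a j; have : (A *m A^T) a a = 1 by rewrite hA mxE eqxx.
  rewrite mxE => <-.
  have -> : A a j ^+ 2 = A a j * A^T j a by rewrite mxE expr2.
  apply: (le_sum_term (w := fun j => A a j * A^T j a)) => i.
  by rewrite mxE -expr2 sqr_ge0.
have S0 : 0 <= \sum_(j < n) \sum_(k < n) Gm j k * \sum_(a < d) (A a j - A a k) ^+ 2.
  apply: sumr_ge0 => j _; apply: sumr_ge0 => k _; rewrite mulr_ge0 //.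
    by have /andP [] := h j k.
  by apply: sumr_ge0 => a _; apply: sqr_ge0.
rewrite /lapTr; apply: (@le_trans _ _ (\sum_(j < n) \sum_(k < n) Gm j k * \sum_(a < d) (A a j - A a k) ^+ 2)).
  by rewrite ler_piMl // invf_le1 ?ler1n // ltr0n.
have -> : ((4 * d)%:R *+ n) *+ n = \sum_(j < n) \sum_(k < n) (4 * d)%:R :> R.
  by rewrite !sumr_const !card_ord.
apply: ler_sum => j _; apply: ler_sum => k _; have /andP [g0 g1] := h j k.
apply: (@le_trans _ _ (1 * \sum_(a < d) (A a j - A a k) ^+ 2)).
  by rewrite ler_wpM2r // sumr_ge0 // => a _; apply: sqr_ge0.
have -> : (4 * d)%:R = \sum_(a < d) 4%:R :> R.
  by rewrite sumr_const card_ord mulrnA.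
rewrite mul1r; apply: ler_sum => a _.
apply: le_trans (sqrD_le _ _) _.
rewrite sqrrN; have := hA1 a j; have := hA1 a k; lra.
Qed.

Lemma delta_term_le (N y x lam : R) : 0 <= N -> 0 <= y -> 0 <= x -> 0 < lam ->
  lam * (N / Num.sqrt (y + lam * x) * x) <= N * (1 + lam * x).
Proof.
move=> N0 y0 x0 l0.
have lx0 : 0 <= lam * x by rewrite mulr_ge0 // ltW.
have -> : lam * (N / Num.sqrt (y + lam * x) * x) = N * (lam * x / Num.sqrt (y + lam * x)).
  by rewrite mulrC !mulrA [_ * lam]mulrC -!mulrA [x / _]mulrC; ring.
rewrite ler_wpM2l //.
case: (eqVneq (lam * x) 0) => [->|lxn0].
  by rewrite mul0r addr0 ler01.
have lxp : 0 < lam * x by rewrite lt_def lxn0 lx0.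
set q := Num.sqrt (lam * x).
have qp : 0 < q by rewrite sqrtr_gt0.
have qs : q <= Num.sqrt (y + lam * x) by rewrite ler_sqrt ?addr_ge0 // lerDr.
have sp : 0 < Num.sqrt (y + lam * x) by apply: lt_le_trans qs.
have eq : lam * x = q * q by rewrite -expr2 sqr_sqrtr.
rewrite ler_pdivrMr // {1}eq.
apply: (@le_trans _ _ (q * Num.sqrt (y + lam * x))); first by rewrite ler_wpM2l // ltW.
rewrite ler_wpM2r ?(ltW sp) // eq.
nra.
Qed.

Lemma POm_norm n1 n2 n3 Om (T : tensor R n1 n2 n3) : tnormF2 (POm Om T) <= tnormF2 T.
Proof.
rewrite -[X in _ <= X]mul1r; apply: tnormF2_le1 => a b c.
by rewrite /POm mul1r; case: (Om a b c) => //; rewrite expr0n /= sqr_ge0.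
Qed.

End Aux5.
Lemma sqr3_le (R : realType) (a b c : R) :
  (a + (b + c)) ^+ 2 <= 2 * a ^+ 2 + 4 * b ^+ 2 + 4 * c ^+ 2.
Proof.
have h1 := sqrD_le a (b + c); have h2 := sqrD_le b c.
set A := a ^+ 2 in h1 *; set X := (b + c) ^+ 2 in h1 h2.
set Bb := b ^+ 2 in h2 *; set Cc := c ^+ 2 in h2 *; lra.
Qed.

Theorem theorem2 (R : realType) (n m d r : nat) (di : 'I_m -> nat)
  (X : forall i, 'M[R]_(di i, n)) (pres : 'I_m -> 'I_n -> bool)
  (M : tensor R n m n) (Om : 'I_n -> 'I_m -> 'I_n -> bool)
  (lam mu gam p : R) (w : 'I_(minn n m) -> R)
  (Phi : 'M[R]_(n, r)) (Phic : 'M[R]_(n, n - r))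
  (A : nat -> 'M[R]_(d, n)) (W : nat -> forall i, 'M[R]_(di i, d))
  (delta : nat -> 'I_m -> R) (G Y C : nat -> tensor R n m n) :
  (forall i j, ~~ pres i j -> col j (X i) = 0) ->
  (forall i, X i *m Pmat (pres i) *m (X i)^T \in unitmx) ->
  0 < lam -> 0 < mu -> 0 < gam -> 0 < p -> p <= 1 ->
  (forall j, 0 <= w j) ->
  (forall j1 j2 : 'I_(minn n m), (j1 <= j2)%N -> w j2 <= w j1) ->
  (r <= n)%N ->
  Phi^T *m Phi = 1%:M ->
  (row_mx Phi Phic)^T *m row_mx Phi Phic = 1%:M ->
  row_mx Phi Phic *m (row_mx Phi Phic)^T = 1%:M ->
  alg_run X pres M Om lam mu gam p w Phi Phic A W delta G Y C ->
  [/\ (fun k => tnormF (tsub (G k) (Y k))) @ \oo --> 0,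
      (fun k => tnormF (tsub (G k.+1) (G k))) @ \oo --> 0 &
      (fun k => tnormF (tsub (Y k.+1) (Y k))) @ \oo --> 0].
Proof.
move=> hX hinv hlam hmu hgam hp0 hp1 hw0 hwdec hrn hPhi hPb1 hPb2
  [hd0 [hC0 [hG0 [hY0 hstep]]]].
set Wt := \sum_j w j.
have W0 : 0 <= Wt by apply: sumr_ge0.
have rp : forall k, 0 < @rho R k := rho_pos R.
have tau0 : forall k, 0 <= mu / rho k := fun k => divr_ge0 (ltW hmu) (ltW (rp k)).
have ca0 : forall k, 0 <= 4 * (mu / rho k) * Wt.
  by move=> k; rewrite mulr_ge0 // mulr_ge0 // ler0n.
pose B k := tadd (G k.+1) (tscale (rho k)^-1 (C k)).
pose Ek k := tnormF2 (tsub (B k) (Y k.+1)).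
pose cc k := tnormF2 (tscale (rho k)^-1 (C k)).
pose gap k := tnormF2 (tsub (G k) (Y k)).
pose Dk k := tnormF2 (tadd (tsub (G k) (Y k)) (tscale (rho k)^-1 (C k))).
pose l := minn n m.
have feas : forall k, Gfeas (G k.+1).
  by move=> k; have [_ [_ [[h _] _]]] := hstep k.
have hEk : forall k, Ek k <= 2 * (mu / rho k) * Wt * (r%:R * l%:R + tnormF2 (B k)).
  move=> k; have [_ [_ [_ [h4 _]]]] := hstep k.
  move: h4 => /= [Zs [hZ hYe]].
  by rewrite /Ek hYe; apply: (ystep_bound (p := p)).
have hB : forall k, tnormF2 (B k) <= 2 * (n * m)%:R + 2 * cc k.
  move=> k; apply: le_trans (_ : _ <= 2 * tnormF2 (G k.+1) + 2 * cc k) _.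
    by rewrite /cc; apply: tnormF2_le => a b c; exact: sqrD_le.
  by rewrite lerD2r ler_wpM2l // Gfeas_norm.
have hcc : forall k, cc k.+1 <= Ek k.
  move=> k; have [_ [_ [_ [_ h5]]]] := hstep k.
  rewrite /cc /Ek -[X in _ <= X]mul1r; apply: tnormF2_le1 => a b c.
  rewrite h5 /tscale /tadd /tsub /B rhoS.
  set g := G k.+1 a b c; set y := Y k.+1 a b c; set cv := C k a b c.
  have rn : rho k != 0 := lt0r_neq0 (rp k).
  have -> : (rho k * (11%:R / 10%:R))^-1 * (cv + rho k * (g - y)) =
            (10%:R / 11%:R) * (g + (rho k)^-1 * cv - y).
    by field; rewrite rn /= ?pnatr_eq0.
  rewrite exprMn mul1r; apply: ler_piMl; first exact: sqr_ge0.
  apply: exprn_ile1.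
    by rewrite divr_ge0 ?ler0n.
  by rewrite ler_pdivrMr ?ltr0n // mul1r ler_nat.
have hgap : forall k, gap k.+1 <= 2 * Ek k + 2 * cc k.
  move=> k; rewrite /gap /Ek /cc; apply: tnormF2_le => a b c.
  rewrite /tsub /B /tadd /tscale.
  set g := G k.+1 a b c; set y := Y k.+1 a b c; set s := (rho k)^-1 * C k a b c.
  have -> : g - y = (g + s - y) + - s by ring.
  by apply: le_trans (sqrD_le _ _) _; rewrite sqrrN.
have hD : forall k, Dk k <= 2 * gap k + 2 * cc k.
  by move=> k; rewrite /Dk /gap /cc; apply: tnormF2_le => a b c; exact: sqrD_le.
pose Lmax : R := ((4 * d)%:R *+ n) *+ n.
pose H1 : R := \sum_(i < m) (n%:R * (1 + lam * Lmax)).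
pose H : R := H1 + gam / 2 * (2 * (n * m)%:R + 2 * tnormF2 M).
pose D2 k := tnormF2 (tadd (tsub (G k.+2) (Y k.+1)) (tscale (rho k.+1)^-1 (C k.+1))).
have hobj : forall k, rho k.+1 / 2 * D2 k <= H + rho k.+1 / 2 * Dk k.+1.
  move=> k.
  have [[hA _] [hdel [[_ hmin] _]]] := hstep k.+1.
  have := hmin (G k.+1) (feas k).
  rewrite /Gobj -/(D2 k) -/(Dk k.+1).
  set L2 := \sum_(i < m) delta k.+2 i * lapTr (A k.+2) (lslice (G k.+2) i).
  set L1 := \sum_(i < m) delta k.+2 i * lapTr (A k.+2) (lslice (G k.+1) i).
  set q2 := tnormF2 (tsub (POm Om (G k.+2)) (POm Om M)).
  set q1 := tnormF2 (tsub (POm Om (G k.+1)) (POm Om M)).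
  have dge0 : forall i, 0 <= delta k.+2 i.
    by move=> i; rewrite hdel divr_ge0 ?ler0n ?sqrtr_ge0.
  have L20 : 0 <= lam * L2.
    rewrite mulr_ge0 ?(ltW hlam) //; apply: sumr_ge0 => i _.
    rewrite mulr_ge0 ?dge0 //; apply: lapTr_ge0 => j j'.
    by rewrite mxE; have [h0 _] := feas k.+1; exact: h0.
  have q20 : 0 <= gam / 2 * q2 by rewrite mulr_ge0 ?tnormF2_ge0 // divr_ge0 ?ler0n // ltW.
  have L1H : lam * L1 <= H1.
    rewrite /L1 mulr_sumr; apply: ler_sum => i _.
    rewrite hdel /fobj.
    set x := lapTr (A k.+2) (lslice (G k.+1) i).
    have x0 : 0 <= x.
      by apply: lapTr_ge0 => j j'; rewrite mxE; have [h0 _] := feas k; exact: h0.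
    have xL : x <= Lmax.
      apply: lapTr_le => // j j'; rewrite mxE; have [h0 _] := feas k.
      by rewrite h0 Gfeas_le1.
    apply: le_trans (delta_term_le _ _ x0 hlam) _.
    - by rewrite ler0n.
    - exact: mfro2_ge0.
    apply: ler_pM.
    - by rewrite ler0n.
    - by rewrite addr_ge0 ?ler01 // mulr_ge0 // ltW.
    - by rewrite ler_nat; apply: (leq_trans (max_card _)); rewrite card_ord.
    - by rewrite lerD2l ler_wpM2l // ltW.
  have q1b : q1 <= 2 * (n * m)%:R + 2 * tnormF2 M.
    apply: le_trans (_ : _ <= 2 * tnormF2 (POm Om (G k.+1)) + 2 * tnormF2 (POm Om M)) _.
      by apply: tnormF2_le => a b c; rewrite /tsub;
         apply: le_trans (sqrD_le _ _) _; rewrite sqrrN.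
    apply: lerD; rewrite ler_wpM2l //.
      exact: le_trans (POm_norm _ _) (Gfeas_norm (feas k)).
    exact: POm_norm.
  have q1b' : gam / 2 * q1 <= gam / 2 * (2 * (n * m)%:R + 2 * tnormF2 M).
    by rewrite ler_wpM2l // divr_ge0 ?ler0n // ltW.
  rewrite /H => hle.
  set P2 := rho k.+1 / 2 * D2 k in hle *.
  set P1 := rho k.+1 / 2 * Dk k.+1 in hle *.
  set Q1 := gam / 2 * (2 * (n * m)%:R + 2 * tnormF2 M) in q1b' *.
  move: hle L20 q20 L1H q1b'.
  set a1 := lam * L2; set a2 := gam / 2 * q2; set a3 := lam * L1; set a4 := gam / 2 * q1.
  lra.
have hD2 : forall k, D2 k <= 2 * H / rho k.+1 + Dk k.+1.
  move=> k; have h := hobj k.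
  rewrite -(@ler_pM2l _ (rho k.+1 / 2)) ?divr_gt0 ?ltr0n //.
  have -> : rho k.+1 / 2 * (2 * H / rho k.+1 + Dk k.+1) = H + rho k.+1 / 2 * Dk k.+1.
    by field; rewrite lt0r_neq0 ?rp.
  exact: h.
have rhoinv : (fun k => (@rho R k)^-1) @ \oo --> 0 := rho_inv_cvg (R:=R).
have ha : (fun k => 4 * (mu / rho k) * Wt) @ \oo --> 0.
  apply: (@cvg0_le R _ (fun k => (rho k)^-1 * (4 * mu * Wt))).
    move=> k; apply/andP; split.
      exact: ca0.
    by rewrite le_eqVlt; apply/orP; left; apply/eqP; ring.
  exact: cvg0_scale.
have hE : Ek @ \oo --> 0.
  apply: (rec_cvg (E := Ek) (a := fun k => 4 * (mu / rho k) * Wt)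
            (K := r%:R * l%:R + (n * m)%:R)).
  - by rewrite addr_ge0 ?mulr_ge0 ?ler0n.
  - by move=> k; rewrite /Ek tnormF2_ge0.
  - exact: ca0.
  - exact: ha.
  - move=> k; apply: le_trans (hEk k.+1) _.
    set c := 2 * (mu / rho k.+1) * Wt.
    have c0 : 0 <= c by rewrite /c mulr_ge0 // mulr_ge0 // ler0n.
    have e4 : 4 * (mu / rho k.+1) * Wt = 2 * c by rewrite /c; ring.
    rewrite e4.
    have hb := hB k.+1; have hc := hcc k.
    have rl0 : 0 <= r%:R * l%:R :> R by rewrite mulr_ge0 ?ler0n.
    apply: le_trans (_ : c * (r%:R * l%:R + (2 * (n * m)%:R + 2 * Ek k)) <= _).
      rewrite ler_wpM2l // lerD2l; apply: le_trans hb _; rewrite lerD2l ler_wpM2l //.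
    rewrite -mulrA mulrCA ler_wpM2l //.
    move: rl0; set u := r%:R * l%:R; set v := (n * m)%:R; lra.
have hccc : cc @ \oo --> 0.
  apply: cvg0_shift; apply: (cvg0_le (v := Ek)) => // k.
  by rewrite /cc tnormF2_ge0 hcc.
have hgapc : gap @ \oo --> 0.
  apply: cvg0_shift; apply: (cvg0_le (v := fun k => 2 * Ek k + 2 * cc k)).
    by move=> k; rewrite /gap tnormF2_ge0 hgap.
  exact: cvg0_lin.
have hDc : Dk @ \oo --> 0.
  apply: (cvg0_le (v := fun k => 2 * gap k + 2 * cc k)).
    by move=> k; rewrite /Dk tnormF2_ge0 hD.
  exact: cvg0_lin.
have hgd : forall k, tnormF2 (tsub (G k.+2) (G k.+1)) <= 2 * D2 k + 2 * Dk k.+1.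
  move=> k; rewrite /D2 /Dk; apply: tnormF2_le => a b c; rewrite /tsub /tadd /tscale.
  set g2 := G k.+2 a b c; set g1 := G k.+1 a b c; set y := Y k.+1 a b c.
  set s := (rho k.+1)^-1 * C k.+1 a b c.
  have -> : g2 - g1 = (g2 - y + s) + - (g1 - y + s) by ring.
  by apply: le_trans (sqrD_le _ _) _; rewrite sqrrN.
pose gd k := tnormF2 (tsub (G k.+1) (G k)).
have hgdc : gd @ \oo --> 0.
  apply: cvg0_shift.
  apply: (cvg0_le (v := fun k => 2 * (2 * H * (rho k.+1)^-1 + 2 * Dk k.+1) + 2 * Dk k.+1)).
    move=> k; rewrite /gd tnormF2_ge0 /=; apply: le_trans (hgd k) _.
    have h1 := hD2 k; have h2 : 0 <= Dk k.+1 by rewrite /Dk tnormF2_ge0.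
    move: h1 h2; set z := 2 * H / rho k.+1; set t := Dk k.+1; set u := D2 k.
    rewrite -/z; lra.
  apply: cvg0_lin; last exact: (cvg0_shift' hDc).
  apply: cvg0_lin; [exact: (cvg0_shift' rhoinv) | exact: (cvg0_shift' hDc)].
have hyd : forall k, tnormF2 (tsub (Y k.+1) (Y k)) <= 2 * gap k.+1 + 4 * gd k + 4 * gap k.
  move=> k; rewrite /gap /gd; apply: tnormF2_le3 => a b c; rewrite /tsub.
  set y1 := Y k.+1 a b c; set y0 := Y k a b c; set g1 := G k.+1 a b c; set g0 := G k a b c.
  have -> : y1 - y0 = - (g1 - y1) + ((g1 - g0) + (g0 - y0)) by ring.
  by apply: le_trans (sqr3_le _ _ _) _; rewrite sqrrN.
have hydc : (fun k => tnormF2 (tsub (Y k.+1) (Y k))) @ \oo --> 0.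
  apply: (cvg0_le (v := fun k => 2 * gap k.+1 + 4 * (2 * gd k + 2 * gap k))).
    move=> k; rewrite tnormF2_ge0 /=; apply: le_trans (hyd k) _.
    have h1 : 0 <= gd k by rewrite /gd tnormF2_ge0.
    have h2 : 0 <= gap k by rewrite /gap tnormF2_ge0.
    move: h1 h2; set u := gd k; set v := gap k; set t := gap k.+1; lra.
  apply: cvg0_lin; [exact: (cvg0_shift' hgapc) | exact: cvg0_lin].
split.
- exact: (tnormF_cvg0 hgapc).
- exact: (tnormF_cvg0 hgdc).
- exact: (tnormF_cvg0 hydc).
Qed.
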